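(* Let $\Omega$ be a finite-dimensional real Euclidean space and $f_1,\dots,f_N \colon \Omega\to\mathbb{R}$ continuous convex functions such that $E = \frac1N\sum_{j=1}^N f_j$ is coercive, and suppose each $f_j$ is $\mu$-strongly convex for some $\mu>0$. Let $\theta^*$ be the minimizer of $E$. Run DualFL (described in the context) with hyperparameters $\rho = 0$ and $\nu\in(0,\mu]$, and suppose that for some $\gamma>0$ the local iterates satisfy, for all $1\le j\le N$ and $n\ge 0$, \[ \Gamma^{n,j}(\theta_j^{(n+1)}) \leq \frac{1}{N\nu(n+1)^{4+\gamma}}. \] Then the sequence $\{\theta^{(n)}\}$ generated by DualFL converges to $\theta^*$, and moreover $\|\theta^{(n)} - \theta^*\|^2 \lesssim \frac{1}{n^2}$ for $n\ge 0$ (for $n \geq 1$).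
   Context: $h$ is $\mu$-strongly convex if $h-\frac{\mu}{2}\|\cdot\|^2$ is convex; $h^*(p)=\sup_x\{\langle p,x\rangle - h(x)\}$ is the Legendre--Fenchel conjugate. $A\lesssim B$ means $A\le CB$ for a constant $C>0$ independent of the iteration counter $n$. DualFL with hyperparameters $\rho\ge 0$, $\nu>0$: set $\theta^{(0)}=\theta_j^{(0)}=0\in\Omega$ ($1\le j\le N$), $\zeta_j^{(0)}=\zeta_j^{(-1)}=0\in\Omega$, $t_0=1$. For $n=0,1,2,\dots$: each client $j$ computes (by some local iterative solver) an approximate minimizer $\theta_j^{(n+1)}\in\Omega$ of $E^{n,j}(\theta) = f_j(\theta) - \nu\langle\zeta_j^{(n)},\theta\rangle$; then $\theta^{(n+1)}=\frac1N\sum_{j=1}^N\theta_j^{(n+1)}$; then with $t_{n+1} = \frac{1-\rho t_n^2 + \sqrt{(1-\rho t_n^2)^2+4t_n^2}}{2}$, $\beta_n = \frac{t_n-1}{t_{n+1}}\cdot\frac{1-t_{n+1}\rho}{1-\rho}$, each client sets $\zeta_j^{(n+1)} = (1+\beta_n)(\zeta_j^{(n)}+\theta^{(n+1)}-\theta_j^{(n+1)}) - \beta_n(\zeta_j^{(n-1)}+\theta^{(n)}-\theta_j^{(n)})$. Primal-dual gap: with $g_j(\theta)=f_j(\theta)-\frac{\nu}{2}\|\theta\|^2$ and $E^{n,j}_{\mathrm d}(\xi) = g_j^*(\xi)+\frac{1}{2\nu}\|\xi-\nu\zeta_j^{(n)}\|^2$, define $\Gamma^{n,j}(\theta) = E^{n,j}(\theta)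 + E^{n,j}_{\mathrm d}(\nu(\zeta_j^{(n)}-\theta))$. *)

(* Defs.v *)
(* Omega = 'rV[R]_d with the standard
   Euclidean inner product. *)
From HB Require Import structures.
From mathcomp Require Import all_boot all_order all_algebra.
From mathcomp Require Import all_classical all_reals all_analysis.
Set Implicit Arguments. Unset Strict Implicit. Unset Printing Implicit Defensive.
Import Order.TTheory GRing.Theory Num.Theory.
Import numFieldNormedType.Exports.
Local Open Scope ring_scope.

Section DualFL.
Variables (R : realType) (d : nat).
Notation vec := 'rV[R]_d.

Definition dot (u v : vec) : R := \sum_(i < d) u ord0 i * v ord0 i.
Definition sqnorm (u : vec) : R := dot u u.

Definition convex_fun (h : vec -> R) : Prop :=
  forall (x y : vec) (t : R), 0 <= t -> t <= 1 ->
    h (t *: x + (1 - t) *: y) <= t * h x + (1 - t) * h y.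

Definition strongly_convex (mu : R) (h : vec -> R) : Prop :=
  convex_fun (fun x => h x - mu / 2 * sqnorm x).

Definition coercive (h : vec -> R) : Prop :=
  forall M : R, exists r : R, forall x : vec, r <= Num.sqrt (sqnorm x) -> M <= h x.

Definition fconj (h : vec -> R) (p : vec) : \bar R :=
  ereal_sup (range (fun x : vec => (dot p x - h x)%:E)).

Fixpoint tseq (rho : R) (n : nat) : R :=
  match n with
  | 0 => 1
  | m.+1 => let t := tseq rho m in
      (1 - rho * t ^+ 2 + Num.sqrt ((1 - rho * t ^+ 2) ^+ 2 + 4 * t ^+ 2)) / 2
  end.

Definition beta (rho : R) (n : nat) : R :=
  (tseq rho n - 1) / tseq rho n.+1 * ((1 - tseq rho n.+1 * rho) / (1 - rho)).

Variable N : nat.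

(* thj n j : local iterate theta_j^(n) returned by client j (used for n >= 1);
   theta_j^(0) = 0 is enforced. *)
Definition loc (thj : nat -> 'I_N -> vec) (n : nat) (j : 'I_N) : vec :=
  if n is 0 then 0 else thj n j.

Definition avg (thj : nat -> 'I_N -> vec) (n : nat) : vec :=
  N%:R^-1 *: \sum_(j < N) loc thj n j.

(* (zeta_j^(n), zeta_j^(n-1)) *)
Fixpoint zeta_pair (rho : R) (thj : nat -> 'I_N -> vec) (j : 'I_N) (n : nat)
  : vec * vec :=
  match n with
  | 0 => (0, 0)
  | m.+1 => let zz := zeta_pair rho thj j m in
      ((1 + beta rho m) *: (zz.1 + avg thj m.+1 - loc thj m.+1 j)
        - beta rho m *: (zz.2 + avg thj m - loc thj m j), zz.1)
  end.

Definition zeta rho thj j n : vec := (zeta_pair rho thj j n).1.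

Definition Eloc (f : 'I_N -> vec -> R) (nu rho : R) thj (n : nat) (j : 'I_N)
  (th : vec) : R := f j th - nu * dot (zeta rho thj j n) th.

Definition Edual (f : 'I_N -> vec -> R) (nu rho : R) thj (n : nat) (j : 'I_N)
  (xi : vec) : \bar R :=
  (fconj (fun x => f j x - nu / 2 * sqnorm x)%R xi
  + ((2 * nu)^-1 * sqnorm (xi - nu *: zeta rho thj j n))%R%:E)%E.

Definition Gap (f : 'I_N -> vec -> R) (nu rho : R) thj (n : nat) (j : 'I_N)
  (th : vec) : \bar R :=
  ((Eloc f nu rho thj n j th)%:E
  + Edual f nu rho thj n j (nu *: (zeta rho thj j n - th))%R)%E.

End DualFL.

(* Main.v *)
Require Import Defs.
From HB Require Import structures.
From mathcomp Require Import all_boot all_order all_algebra.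
From mathcomp Require Import all_classical all_reals all_analysis.
From mathcomp Require Import ring lra.
Import Order.TTheory GRing.Theory Num.Theory.
Import numFieldNormedType.Exports.
Local Open Scope classical_set_scope.
Local Open Scope ring_scope.
Set Implicit Arguments. Unset Strict Implicit. Unset Printing Implicit Defensive.

Section Subgrad.
Variable R : realType.

Definition mdot m n (A B : 'M[R]_(m, n)) : R :=
  \sum_(p : 'I_m * 'I_n) A p.1 p.2 * B p.1 p.2.

Definition mconvex m n (phi : 'M[R]_(m, n) -> R) : Prop :=
  forall (X Y : 'M[R]_(m, n)) (t : R), 0 <= t -> t <= 1 ->
    phi (t *: X + (1 - t) *: Y) <= t * phi X + (1 - t) * phi Y.

Lemma mdot0r m n (A : 'M[R]_(m, n)) : mdot A 0 = 0.
Proof. by rewrite /mdot big1 // => p _; rewrite mxE mulr0. Qed.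

Lemma mdot0l m n (A : 'M[R]_(m, n)) : mdot 0 A = 0.
Proof. by rewrite /mdot big1 // => p _; rewrite mxE mul0r. Qed.

Lemma mdotDr m n (A B C : 'M[R]_(m, n)) : mdot A (B + C) = mdot A B + mdot A C.
Proof. by rewrite /mdot -big_split; apply: eq_bigr => p _; rewrite mxE mulrDr. Qed.

Lemma mdotDl m n (A B C : 'M[R]_(m, n)) : mdot (A + B) C = mdot A C + mdot B C.
Proof. by rewrite /mdot -big_split; apply: eq_bigr => p _; rewrite mxE mulrDl. Qed.

Lemma mdotZr m n (A B : 'M[R]_(m, n)) a : mdot A (a *: B) = a * mdot A B.
Proof. by rewrite /mdot mulr_sumr; apply: eq_bigr => p _; rewrite mxE; ring. Qed.

Lemma mdotZl m n (A B : 'M[R]_(m, n)) a : mdot (a *: A) B = a * mdot A B.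
Proof. by rewrite /mdot mulr_sumr; apply: eq_bigr => p _; rewrite mxE; ring. Qed.

Lemma mdotNr m n (A B : 'M[R]_(m, n)) : mdot A (- B) = - mdot A B.
Proof. by rewrite -scaleN1r mdotZr mulN1r. Qed.

Lemma mdotBr m n (A B C : 'M[R]_(m, n)) : mdot A (B - C) = mdot A B - mdot A C.
Proof. by rewrite mdotDr mdotNr. Qed.

Lemma mdot_delta m n (k : 'I_m * 'I_n) (H : 'M[R]_(m, n)) :
  mdot (delta_mx k.1 k.2) H = H k.1 k.2.
Proof.
rewrite /mdot (bigD1 k) //= big1 ?addr0.
  by rewrite mxE !eqxx mul1r.
case=> i j /=; case: k => k1 k2 /=; rewrite xpair_eqE negb_and => hn.
rewrite mxE; case/orP: hn => hn.
  by rewrite (negbTE hn) /= mul0r.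
by rewrite (negbTE hn) andbF mul0r.
Qed.

Lemma delta_off m n (k p : 'I_m * 'I_n) : p != k ->
  (delta_mx k.1 k.2 : 'M[R]_(m, n)) p.1 p.2 = 0.
Proof.
case: p => i j; case: k => k1 k2 /=; rewrite xpair_eqE negb_and mxE => /orP [] hn.
  by rewrite (negbTE hn).
by rewrite (negbTE hn) andbF.
Qed.

Definition msupp m n (A : seq ('I_m * 'I_n)) (H : 'M[R]_(m, n)) :=
  forall p, p \notin A -> H p.1 p.2 = 0.

Lemma subgrad_exists m n (phi : 'M[R]_(m, n) -> R) : mconvex phi ->
  forall x, exists S, forall Y, phi x + mdot S (Y - x) <= phi Y.
Proof.
move=> cvx x.
suff: forall A, exists S, forall H, msupp A H -> phi x + mdot S H <= phi (x + H).
  case/(_ (enum {: 'I_m * 'I_n})) => S HS; exists S => Y.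
  have := HS (Y - x); have -> : x + (Y - x) = Y by rewrite addrC subrK.
  apply => p.
  by rewrite mem_enum.
elim=> [|k A IH].
  exists 0 => H hH; have -> : H = 0 by apply/matrixP => i j; rewrite mxE (hH (i, j)).
  by rewrite mdot0r addr0 addr0.
case: IH => S HS.
pose psi H := phi (x + H) - phi x - mdot S H.
have psi_ge0 H : msupp A H -> 0 <= psi H.
  by move=> /HS h; rewrite /psi subr_ge0 lerBrDr addrC.
have psi_cvx U V t : 0 <= t -> t <= 1 ->
    psi (t *: U + (1 - t) *: V) <= t * psi U + (1 - t) * psi V.
  move=> t0 t1; rewrite /psi.
  have -> : x + (t *: U + (1 - t) *: V) = t *: (x + U) + (1 - t) *: (x + V).
    by apply/matrixP => i j; rewrite !mxE; ring.
  rewrite mdotDr !mdotZr.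
  have := cvx (x + U) (x + V) t t0 t1; lra.
pose E : 'M[R]_(m, n) := delta_mx k.1 k.2.
have key H H' a b : msupp A H -> msupp A H' -> 0 < a -> 0 < b ->
    0 <= psi (H' - b *: E) / b + psi (H + a *: E) / a.
  move=> sH sH' a0 b0.
  pose t := a / (a + b).
  have ab0 : 0 < a + b by rewrite addr_gt0.
  have t0 : 0 <= t by rewrite divr_ge0 // ltW.
  have t1 : t <= 1 by rewrite ler_pdivrMr // mul1r lerDl ltW.
  have := psi_cvx (H' - b *: E) (H + a *: E) t t0 t1.
  have -> : 1 - t = b / (a + b) by rewrite /t; field; rewrite gt_eqF.
  move=> hc.
  have hW : 0 <= psi (t *: (H' - b *: E) + b / (a + b) *: (H + a *: E)).
    apply: psi_ge0 => p pA; rewrite !mxE (sH p pA) (sH' p pA) /t.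
    by field; rewrite gt_eqF.
  have h2 : 0 <= t * psi (H' - b *: E) + b / (a + b) * psi (H + a *: E) by lra.
  have -> : psi (H' - b *: E) / b + psi (H + a *: E) / a =
      (a + b) / (a * b) * (t * psi (H' - b *: E) + b / (a + b) * psi (H + a *: E)).
    by rewrite /t; field; rewrite !gt_eqF.
  by apply: mulr_ge0 => //; rewrite divr_ge0 // ?mulr_ge0 // ltW.
have s0 : msupp A 0 by move=> p _; rewrite mxE.
pose L := [set r | exists H a, [/\ msupp A H, 0 < a & r = psi (H + a *: E) / a]].
have Lne : L !=set0.
  by exists (psi (0 + 1 *: E) / 1); exists 0, 1.
have Llb : lbound L (- psi (0 - 1 *: E) / 1).
  move=> r [H [a [sH a0 ->]]].
  have := key H 0 a 1 sH s0 a0 ltr01; lra.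
have hasL : has_lbound L by exists (- psi (0 - 1 *: E) / 1).
pose c := inf L.
have c1 H a : msupp A H -> 0 < a -> c <= psi (H + a *: E) / a.
  by move=> sH a0; apply: ge_inf => //; exists H, a.
have c2 H b : msupp A H -> 0 < b -> - psi (H - b *: E) / b <= c.
  move=> sH b0; apply: lb_le_inf => // r [H1 [a [sH1 a0 ->]]].
  have := key H1 H a b sH1 sH a0 b0; rewrite mulNr; lra.
exists (S + c *: E) => H sH.
pose a := H k.1 k.2.
pose H0 := H - a *: E.
have sH0 : msupp A H0.
  move=> p pA; case: (boolP (p == k)) => [/eqP -> | pk].
    by rewrite /H0 !mxE /a !eqxx mulr1 subrr.
  have E0 : E p.1 p.2 = 0 := delta_off pk.
  have -> : H0 p.1 p.2 = H p.1 p.2 - a * E p.1 p.2 by rewrite /H0 !mxE.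
  by rewrite E0 mulr0 subr0; apply: sH; rewrite in_cons negb_or pk.
have HE : H = H0 + a *: E by rewrite /H0 subrK.
rewrite mdotDl mdotZl mdot_delta -/a.
suff : c * a <= psi H by rewrite /psi; lra.
have [a0|a0|a0] := ltgtP a 0.
- have := c2 H0 (- a) sH0; rewrite oppr_gt0 => /(_ a0).
  rewrite scaleNr opprK -HE => h.
  have : - psi H <= c * - a by rewrite -ler_pdivrMr ?oppr_gt0 // mulNr.
  lra.
- have := c1 H0 a sH0 a0; rewrite -HE => h.
  by rewrite -ler_pdivlMr // mulrC.
- rewrite a0 mulr0; apply: psi_ge0.
  by rewrite HE a0 scale0r addr0.
Qed.

End Subgrad.

Section DotAPI.
Variables (R : realType) (d : nat).
Notation vec := 'rV[R]_d.
Implicit Types u v w : vec.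

Lemma mulss_ge0 (x : R) : 0 <= x * x.
Proof. by rewrite -expr2 sqr_ge0. Qed.

Lemma dotC u v : dot u v = dot v u.
Proof. by apply: eq_bigr => i _; rewrite mulrC. Qed.
Lemma dotDl u v w : dot (u + v) w = dot u w + dot v w.
Proof. by rewrite /dot -big_split; apply: eq_bigr => i _; rewrite mxE mulrDl. Qed.
Lemma dotDr u v w : dot w (u + v) = dot w u + dot w v.
Proof. by rewrite /dot -big_split; apply: eq_bigr => i _; rewrite mxE mulrDr. Qed.
Lemma dotZl a u v : dot (a *: u) v = a * dot u v.
Proof. by rewrite /dot mulr_sumr; apply: eq_bigr => i _; rewrite mxE mulrA. Qed.
Lemma dotZr a u v : dot u (a *: v) = a * dot u v.
Proof. by rewrite /dot mulr_sumr; apply: eq_bigr => i _; rewrite mxE; ring. Qed.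
Lemma dotNl u v : dot (- u) v = - dot u v.
Proof. by rewrite -scaleN1r dotZl mulN1r. Qed.
Lemma dotNr u v : dot u (- v) = - dot u v.
Proof. by rewrite -scaleN1r dotZr mulN1r. Qed.
Lemma dotBl u v w : dot (u - v) w = dot u w - dot v w.
Proof. by rewrite dotDl dotNl. Qed.
Lemma dotBr u v w : dot w (u - v) = dot w u - dot w v.
Proof. by rewrite dotDr dotNr. Qed.
Lemma dot0l u : dot 0 u = 0.
Proof. by rewrite /dot big1 // => i _; rewrite mxE mul0r. Qed.
Lemma dot0r u : dot u 0 = 0.
Proof. by rewrite dotC dot0l. Qed.
Lemma dot_suml (I : finType) (F : I -> vec) v :
  dot (\sum_i F i) v = \sum_i dot (F i) v.
Proof.
rewrite /dot exchange_big /=; apply: eq_bigr => k _.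
by rewrite summxE mulr_suml.
Qed.
Lemma dot_sumr (I : finType) (F : I -> vec) v :
  dot v (\sum_i F i) = \sum_i dot v (F i).
Proof. by rewrite dotC dot_suml; apply: eq_bigr => i _; rewrite dotC. Qed.
Lemma sqnorm_ge0 u : 0 <= sqnorm u.
Proof. by apply: sumr_ge0 => i _; rewrite mulss_ge0. Qed.
Lemma sqnorm_eq0 u : sqnorm u <= 0 -> u = 0.
Proof.
move=> h.
have h0 : sqnorm u = 0 by apply/eqP; rewrite eq_le h sqnorm_ge0.
apply/matrixP => i k; rewrite (ord1 i) mxE.
move/eqP: h0; rewrite /sqnorm /dot psumr_eq0; last by move=> *; rewrite mulss_ge0.
by move/allP => /(_ k (mem_index_enum _)) /=; rewrite mulf_eq0 orbb => /eqP.
Qed.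
Lemma sqnormD u v : sqnorm (u + v) = sqnorm u + 2 * dot u v + sqnorm v.
Proof. by rewrite /sqnorm !dotDl !dotDr (dotC v u); ring. Qed.
Lemma sqnormB u v : sqnorm (u - v) = sqnorm u - 2 * dot u v + sqnorm v.
Proof. by rewrite /sqnorm !dotDl !dotDr !dotNl !dotNr (dotC v u); ring. Qed.
Lemma sqnormZ a u : sqnorm (a *: u) = a ^+ 2 * sqnorm u.
Proof. by rewrite /sqnorm dotZl dotZr; ring. Qed.
Lemma sqnormN u : sqnorm (- u) = sqnorm u.
Proof. by rewrite /sqnorm dotNl dotNr opprK. Qed.
Lemma sqnorm0 : sqnorm (0 : vec) = 0.
Proof. by rewrite /sqnorm dot0l. Qed.

Lemma mdot_rV (u v : vec) : mdot u v = dot u v.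
Proof. by rewrite /mdot -(pair_bigA _ (fun i j => u i j * v i j)) /= big_ord1. Qed.

Lemma mdot_rows N (A B : 'M[R]_(N, d)) :
  mdot A B = \sum_(j < N) dot (row j A) (row j B).
Proof.
rewrite /mdot -(pair_bigA _ (fun i j => A i j * B i j)) /=; apply: eq_bigr => j _.
by apply: eq_bigr => k _; rewrite !mxE.
Qed.

Lemma sq_lb (b y : vec) (mu : R) : 0 < mu ->
  - sqnorm b / (2 * mu) <= dot b y + mu / 2 * sqnorm y.
Proof.
move=> mu0.
have h : 0 <= \sum_(i < d) (b ord0 i * y ord0 i + mu / 2 * (y ord0 i * y ord0 i)
                            + b ord0 i * b ord0 i / (2 * mu)).
  apply: sumr_ge0 => i _.
  have -> : b ord0 i * y ord0 i + mu / 2 * (y ord0 i * y ord0 i)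
            + b ord0 i * b ord0 i / (2 * mu) = (mu * y ord0 i + b ord0 i) ^+ 2 / (2 * mu).
    by field; rewrite gt_eqF.
  by rewrite divr_ge0 ?sqr_ge0 // mulr_ge0 // ltW.
move: h; rewrite !big_split /= -mulr_sumr -mulr_suml -/(dot b y) -/(dot y y) -/(dot b b).
rewrite /sqnorm mulNr; lra.
Qed.

End DotAPI.

Section SumRule.
Variables (R : realType) (d : nat).
Notation vec := 'rV[R]_d.

Lemma sc_lbound (g : vec -> R) mu : 0 < mu -> strongly_convex mu g ->
  exists K, forall y, K <= g y.
Proof.
move=> mu0 sc.
have [b hb] := subgrad_exists sc 0.
exists ((g 0 - mu / 2 * sqnorm (0 : vec)) - sqnorm b / (2 * mu)) => y.
have := hb y; rewrite subr0 mdot_rV.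
have := sq_lb b y mu0; rewrite mulNr; lra.
Qed.

Lemma sum_rule N (f : 'I_N -> vec -> R) mu x :
  0 < mu -> (forall j, strongly_convex mu (f j)) -> (forall j, convex_fun (f j)) ->
  (forall y, \sum_j f j x <= \sum_j f j y) ->
  exists s : 'I_N -> vec, \sum_j s j = 0 /\
    forall j y, f j x + dot (s j) (y - x) <= f j y.
Proof.
move=> mu0 sc cvx xmin.
have [K hK] := choice (fun j => sc_lbound mu0 (sc j)).
pose F (Z : 'M[R]_(N, d)) y := \sum_j f j (y + row j Z).
pose Sset Z := [set r | exists y, r = F Z y].
pose phi Z := inf (Sset Z).
have Sne Z : Sset Z !=set0 by exists (F Z 0), 0.
have Slb Z : has_lbound (Sset Z).
  exists (\sum_j K j) => r [y ->]; apply: ler_sum => j _; exact: hK.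
have phi_le Z y : phi Z <= F Z y by apply: ge_inf => //; exists y.
have F0 y : F 0 y = \sum_j f j y.
  by rewrite /F; apply: eq_bigr => j _; rewrite row0 addr0.
have phi0 : phi 0 = \sum_j f j x.
  apply/eqP; rewrite eq_le; apply/andP; split.
    by have := phi_le 0 x; rewrite F0.
  by apply: lb_le_inf => // r [y ->]; rewrite F0.
have cphi : mconvex phi.
  move=> Z1 Z2 t t0 t1; apply/ler_addgt0Pr => e e0.
  have [r1 [y1 ->] h1] := inf_adherent e0 (conj (Sne Z1) (Slb Z1)).
  have [r2 [y2 ->] h2] := inf_adherent e0 (conj (Sne Z2) (Slb Z2)).
  apply: (le_trans (phi_le _ (t *: y1 + (1 - t) *: y2))).
  have : F (t *: Z1 + (1 - t) *: Z2) (t *: y1 + (1 - t) *: y2) <=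
         t * F Z1 y1 + (1 - t) * F Z2 y2.
    rewrite /F !mulr_sumr -big_split /=; apply: ler_sum => j _.
    have -> : t *: y1 + (1 - t) *: y2 + row j (t *: Z1 + (1 - t) *: Z2) =
              t *: (y1 + row j Z1) + (1 - t) *: (y2 + row j Z2).
      by apply/matrixP => i k; rewrite !mxE; ring.
    exact: cvx.
  rewrite -/(phi Z1) -/(phi Z2) in h1 h2.
  have t1' : 0 <= 1 - t by rewrite subr_ge0.
  have := ler_wpM2l t0 (ltW h1); have := ler_wpM2l t1' (ltW h2).
  lra.
have [S hS] := subgrad_exists cphi 0.
exists (fun j => row j S); split.
  pose c := \sum_j row j S.
  pose Z : 'M[R]_(N, d) := \matrix_(j < N) c.
  have := hS Z; rewrite subr0 mdot_rows phi0.
  have -> : \sum_j dot (row j S) (row j Z) = sqnorm c.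
    by rewrite /sqnorm dot_suml; apply: eq_bigr => j _; rewrite /Z rowK.
  move=> h; apply: sqnorm_eq0.
  have : F Z (x - c) = \sum_j f j x.
    by rewrite /F; apply: eq_bigr => j _; rewrite /Z rowK subrK.
  have := phi_le Z (x - c); lra.
move=> j y.
pose Z : 'M[R]_(N, d) := \matrix_(i < N) (if i == j then y - x else 0).
have rZ i : row i Z = if i == j then y - x else 0.
  by rewrite /Z rowK.
have hsum : \sum_i dot (row i S) (row i Z) = dot (row j S) (y - x).
  rewrite (bigD1 j) //= big1 ?addr0; last first.
    by move=> i /negbTE hij; rewrite rZ hij dot0r.
  by rewrite rZ eqxx.
have := hS Z; rewrite subr0 mdot_rows phi0 hsum => h.
have hF : F Z x = f j y + \sum_(i < N | i != j) f i x.
  rewrite /F (bigD1 j) //= rZ eqxx.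
  have -> : x + (y - x) = y by rewrite addrC subrK.
  by congr (_ + _); apply: eq_bigr => i /negbTE hij; rewrite rZ hij addr0.
have hx : \sum_i f i x = f j x + \sum_(i < N | i != j) f i x by rewrite (bigD1 j).
rewrite hx in h.
have := phi_le Z x; rewrite hF.
lra.
Qed.

End SumRule.

Section Strong.
Variables (R : realType) (d : nat).
Notation vec := 'rV[R]_d.

Lemma sqnorm_comb (t : R) (x y : vec) :
  sqnorm (t *: y + (1 - t) *: x) =
  t * sqnorm y + (1 - t) * sqnorm x - t * (1 - t) * sqnorm (y - x).
Proof.
rewrite /sqnorm /dot !mulr_sumr -big_split -sumrB /=.
by apply: eq_bigr => i _; rewrite !mxE; ring.
Qed.

Lemma strong_subgrad (f : vec -> R) mu x s : 0 < mu ->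
  strongly_convex mu f -> (forall y, f x + dot s (y - x) <= f y) ->
  forall y, f x + dot s (y - x) + mu / 2 * sqnorm (y - x) <= f y.
Proof.
move=> mu0 sc hs y.
pose a := f y - f x - dot s (y - x).
pose c := mu / 2 * sqnorm (y - x).
have H t : 0 < t -> t <= 1 -> (1 - t) * c <= a.
  move=> t0 t1.
  have := sc y x t (ltW t0) t1.
  rewrite sqnorm_comb.
  have e : t *: y + (1 - t) *: x = x + t *: (y - x).
    by apply/matrixP => i k; rewrite !mxE; ring.
  have := hs (t *: y + (1 - t) *: x); rewrite e.
  have -> : x + t *: (y - x) - x = t *: (y - x) by rewrite addrC addKr.
  rewrite dotZr => h1 h2.
  have h3 : t * ((1 - t) * c) <= t * a.
    rewrite /a /c; move: h1 h2; set D := sqnorm (y - x); set q := dot s (y - x).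
    set F := f (x + t *: (y - x)); move=> h1 h2.
    lra.
  by rewrite -(ler_pM2l t0).
suff : c <= a by rewrite /a /c; lra.
apply/ler_addgt0Pr => e e0.
have c0 : 0 <= c by rewrite /c mulr_ge0 ?sqnorm_ge0 // divr_ge0 // ltW.
pose t := e / (e + c).
have ec : 0 < e + c by rewrite ltr_wpDr.
have t0 : 0 < t by rewrite divr_gt0.
have t1 : t <= 1 by rewrite ler_pdivrMr // mul1r lerDl.
have := H t t0 t1.
have : t * c <= e.
  rewrite /t mulrAC ler_pdivrMr //; nra.
lra.
Qed.

End Strong.

Section GapIneq.
Variables (R : realType) (d N : nat).
Notation vec := 'rV[R]_d.

Lemma gap_ineq (f : 'I_N -> vec -> R) nu thj n j (th : vec) eps : 0 < nu ->
  (Gap f nu 0 thj n j th <= eps%:E)%E ->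
  forall y, f j th - nu / 2 * sqnorm th + dot (nu *: (zeta 0 thj j n - th)) (y - th) - eps
            <= f j y - nu / 2 * sqnorm y.
Proof.
move=> nu0 hg y.
set z := zeta 0 thj j n.
set xi := nu *: (z - th).
have hsup : ((dot xi y - (f j y - nu / 2 * sqnorm y))%:E <=
             fconj (fun x => (f j x - nu / 2 * sqnorm x)%R) xi)%E.
  by apply: ereal_sup_ubound; exists y.
have h1 : ((f j th - nu * dot z th + ((dot xi y - (f j y - nu / 2 * sqnorm y))
           + (2 * nu)^-1 * sqnorm (xi - nu *: z)))%:E <= eps%:E)%E.
  apply: le_trans hg; rewrite /Gap /Edual /Eloc -/z -/xi !EFinD.
  apply: leeD2l.
  apply: leeD2r.
  by rewrite -EFinD.
rewrite lee_fin in h1.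
have e1 : xi - nu *: z = - (nu *: th).
  by apply/matrixP => i k; rewrite !mxE; ring.
have e2 : (2 * nu)^-1 * sqnorm (xi - nu *: z) = nu / 2 * sqnorm th.
  by rewrite e1 sqnormN sqnormZ; field; rewrite gt_eqF.
have e3 : dot xi (y - th) = dot xi y - nu * (dot z th - sqnorm th).
  by rewrite dotBr /xi !dotZl !dotBl /sqnorm; ring.
rewrite e2 in h1; rewrite e3; lra.
Qed.

End GapIneq.

Section Tseq.
Variable R : realType.

Lemma tseqS n : tseq (0 : R) n.+1 =
  (1 + Num.sqrt (1 + 4 * tseq 0 n ^+ 2)) / 2.
Proof. by rewrite /= !mul0r subr0 expr1n. Qed.

Lemma tseq_ge0 n : 0 <= tseq (0 : R) n.
Proof.
case: n => [|m]; first by rewrite /= ler01.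
by rewrite tseqS divr_ge0 // addr_ge0 // sqrtr_ge0.
Qed.

Lemma tseq_facts n : let t := tseq (0 : R) n in let t' := tseq (0 : R) n.+1 in
  [/\ t' ^+ 2 - t' = t ^+ 2, t + 1 / 2 <= t' & t' <= t + 1].
Proof.
move=> t t'; rewrite /t' tseqS -/t.
set s := Num.sqrt _.
have s0 : 0 <= s by apply: sqrtr_ge0.
have ss : s ^+ 2 = 1 + 4 * t ^+ 2 by rewrite sqr_sqrtr // addr_ge0 // mulr_ge0 // sqr_ge0.
have t0 : 0 <= t by apply: tseq_ge0.
split.
- lra.
- have : 2 * t <= s by nra.
  lra.
- have : s <= 2 * t + 1 by nra.
  lra.
Qed.

Lemma tseq_ge (n : nat) : n.+2%:R / 2 <= tseq (0 : R) n.
Proof.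
elim: n => [|n IH]; first by rewrite /= divff // pnatr_eq0.
have [_ h _] := tseq_facts n.
apply: le_trans h; move: IH; rewrite -addn1 natrD; lra.
Qed.

Lemma tseq_le (n : nat) : tseq (0 : R) n <= n.+1%:R.
Proof.
elim: n => [|n IH]; first by rewrite /=.
have [_ _ h] := tseq_facts n.
apply: (le_trans h); rewrite -[n.+2]addn1 natrD; lra.
Qed.

Lemma tseq_ge1 n : 1 <= tseq (0 : R) n.
Proof.
apply: le_trans (tseq_ge n); rewrite ler_pdivlMr // mul1r ler_nat //.
Qed.

Lemma beta0 m : beta (0 : R) m = (tseq 0 m - 1) / tseq 0 m.+1.
Proof. by rewrite /beta mulr0 !subr0 divr1 mulr1. Qed.

End Tseq.

Section Key.
Variables (R : realType) (d N : nat).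
Notation vec := 'rV[R]_d.
Hypothesis N0 : (0 < N)%N.

Definition mean (u : 'I_N -> vec) : vec := N%:R^-1 *: \sum_j u j.

Lemma NR0 : N%:R != 0 :> R.
Proof. by rewrite pnatr_eq0 -lt0n. Qed.

Lemma sum_mean (u : 'I_N -> vec) : \sum_j u j = N%:R *: mean u.
Proof. by rewrite /mean scalerA mulfV ?NR0 // scale1r. Qed.

Lemma mean_lin (u v : 'I_N -> vec) a b :
  mean (fun j => a *: u j + b *: v j) = a *: mean u + b *: mean v.
Proof.
rewrite /mean big_split /= -!scaler_sumr !scalerDr !scalerA.
by rewrite (mulrC a) (mulrC b).
Qed.

Lemma mean_B (u v : 'I_N -> vec) : mean (fun j => u j - v j) = mean u - mean v.
Proof.
have := mean_lin u v 1 (-1).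
under eq_fun do rewrite scale1r scaleN1r.
by rewrite scale1r scaleN1r.
Qed.

Lemma sumr_constR (c : R) : \sum_(j < N) c = N%:R * c.
Proof. by rewrite sumr_const card_ord mulr_natl. Qed.

Lemma cs_mean (D : 'I_N -> vec) : N%:R * sqnorm (mean D) <= \sum_j sqnorm (D j).
Proof.
have h : 0 <= \sum_j sqnorm (D j - mean D) by apply: sumr_ge0 => j _; apply: sqnorm_ge0.
have e : \sum_j sqnorm (D j - mean D) =
    \sum_j sqnorm (D j) - 2 * dot (\sum_j D j) (mean D) + N%:R * sqnorm (mean D).
  rewrite (eq_bigr (fun j => sqnorm (D j) - 2 * dot (D j) (mean D) + sqnorm (mean D))); last first.
    by move=> j _; rewrite sqnormB.
  by rewrite big_split sumrB /= -mulr_sumr -dot_suml sumr_constR.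
move: h; rewrite e sum_mean dotZl -/(sqnorm (mean D)); lra.
Qed.

Lemma key_ineq (X Y A B w : 'I_N -> vec) (p : R) : 0 <= p -> p <= 1 ->
  (forall j, w j = (1 - p) *: A j + p *: B j) ->
  1 / 2 * \sum_j (sqnorm (X j - w j) - sqnorm (Y j - w j)) <=
  \sum_j dot (Y j - mean Y - X j) (w j - X j) +
  N%:R / 2 * ((1 - p) * sqnorm (mean A) + p * sqnorm (mean B) - sqnorm (mean X)).
Proof.
move=> p0 p1 hw.
have hb j : dot (Y j - X j) (w j - X j) = 1 / 2 * sqnorm (Y j - X j)
    + 1 / 2 * (sqnorm (X j - w j) - sqnorm (Y j - w j)).
  rewrite /sqnorm /dot -sumrB !mulr_sumr -big_split /=.
  by apply: eq_bigr => i _; rewrite !mxE; field.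
set Q := \sum_j sqnorm (Y j - X j).
have hbs : \sum_j dot (Y j - X j) (w j - X j) =
    1 / 2 * Q + 1 / 2 * \sum_j (sqnorm (X j - w j) - sqnorm (Y j - w j)).
  by rewrite /Q !mulr_sumr -big_split /=; apply: eq_bigr => j _; rewrite hb.
have ha : \sum_j dot (Y j - mean Y - X j) (w j - X j) =
    \sum_j dot (Y j - X j) (w j - X j) - dot (mean Y) (\sum_j (w j - X j)).
  rewrite dot_sumr -sumrB; apply: eq_bigr => j _; rewrite -dotBl; congr dot.
  by apply/matrixP => i k; rewrite !mxE; ring.
have hs : \sum_j (w j - X j) = N%:R *: (mean w - mean X).
  by rewrite sumrB !sum_mean scalerBr.
have hmw : mean w = p *: mean B + (1 - p) *: mean A.
  rewrite addrC -mean_lin; congr mean; apply: funext => j; exact: hw.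
have hcs : N%:R * sqnorm (mean Y - mean X) <= Q.
  by rewrite -mean_B; apply: cs_mean.
have e4 := sqnorm_comb p (mean A) (mean B); rewrite -hmw in e4.
have Nge0 : 0 <= N%:R :> R by apply: ler0n.
have h2 : 0 <= N%:R * sqnorm (mean w - mean Y) by rewrite mulr_ge0 // sqnorm_ge0.
have h3 : 0 <= N%:R * (p * (1 - p) * sqnorm (mean B - mean A)).
  by rewrite mulr_ge0 // mulr_ge0 ?sqnorm_ge0 // mulr_ge0 // subr_ge0.
rewrite sqnormB in h2; rewrite sqnormB in hcs.
have e4' : N%:R * sqnorm (mean w) = N%:R * (p * sqnorm (mean B) + (1 - p) * sqnorm (mean A)
   - p * (1 - p) * sqnorm (mean B - mean A)) by rewrite e4.
rewrite ha hbs hs dotZr dotBr; rewrite (dotC (mean w)) in h2.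
lra.
Qed.

End Key.

Section Algo.
Variables (R : realType) (d N : nat) (f : 'I_N -> 'rV[R]_d -> R) (nu gamma : R)
  (thstar : 'rV[R]_d) (thj : nat -> 'I_N -> 'rV[R]_d) (xs : 'I_N -> 'rV[R]_d).
Notation vec := 'rV[R]_d.
Hypothesis N0 : (0 < N)%N.
Hypothesis nu0 : 0 < nu.

Definition epsn (n : nat) : R := (N%:R * nu * (n.+1%:R `^ (4 + gamma)))^-1.
Definition gf j (y : vec) := f j y - nu / 2 * sqnorm y.
Definition th n j := loc thj n j.
Definition zprev n j := (zeta_pair 0 thj j n).2.
Definition xx n j : vec := nu *: (zprev n j - th n j).

Lemma xx_succ n j : xx n.+1 j = nu *: (zeta 0 thj j n - th n.+1 j).
Proof. by []. Qed.

Lemma sum_const_vec (c : vec) : \sum_(j < N) c = N%:R *: c.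
Proof. by rewrite sumr_const card_ord scaler_nat. Qed.

Lemma avg_mean n : avg thj n = mean (fun j => th n j).
Proof. by []. Qed.

Lemma sum_th n : \sum_j th n j = N%:R *: avg thj n.
Proof. by rewrite avg_mean -sum_mean. Qed.

Lemma sum_dev n : \sum_j (avg thj n - th n j) = 0.
Proof. by rewrite sumrB sum_const_vec sum_th subrr. Qed.

Lemma sum_zeta n : \sum_j zeta 0 thj j n = 0 /\ \sum_j zprev n j = 0.
Proof.
elim: n => [|m [IH1 IH2]].
  by split; apply: big1.
split; last by rewrite /zprev /=.
rewrite /zeta /=.
rewrite sumrB -!scaler_sumr.
have e k (z : 'I_N -> vec) : \sum_j (z j + avg thj k - loc thj k j) =
    \sum_j z j + \sum_j (avg thj k - th k j).
  by rewrite -big_split /=; apply: eq_bigr => j _; rewrite addrA.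
by rewrite !e !sum_dev -/(zeta 0 thj _ m) IH1 IH2 !addr0 !scaler0 subrr.
Qed.

Lemma sum_xx n : \sum_j xx n j = - (N%:R * nu) *: avg thj n.
Proof.
rewrite /xx -scaler_sumr sumrB (proj2 (sum_zeta n)) sum_th sub0r.
by rewrite scalerN scalerA mulrC scaleNr.
Qed.

Lemma mean_xx n : mean (xx n) = - nu *: avg thj n.
Proof.
rewrite /mean sum_xx scalerA; congr (_ *: _).
by rewrite mulrN mulrA mulVf ?NR0 // mul1r.
Qed.

Lemma zeta_rec m j : nu *: zeta 0 thj j m.+1 =
  (1 + beta 0 m) *: (xx m.+1 j + nu *: avg thj m.+1)
  - beta 0 m *: (xx m j + nu *: avg thj m).
Proof.
rewrite /xx /zprev /th /zeta /=.
by apply/matrixP => i k; rewrite !mxE; ring.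
Qed.

Definition Yv n j : vec :=
  if n is m.+1 then (1 + beta 0 m) *: xx n j - beta 0 m *: xx m j else 0.

Lemma zeta_Y n j : nu *: zeta 0 thj j n = Yv n j - mean (Yv n).
Proof.
case: n => [|m].
  rewrite /Yv /zeta /= scaler0.
  by rewrite /mean big1 ?scaler0 ?subr0.
have -> : mean (Yv m.+1) = (1 + beta 0 m) *: mean (xx m.+1) + (- beta 0 m) *: mean (xx m).
  by rewrite -mean_lin; congr mean; apply: funext => i; rewrite /Yv scaleNr.
rewrite !mean_xx zeta_rec /Yv.
by apply/matrixP => i k; rewrite !mxE; ring.
Qed.

Lemma th_Y n j : nu *: th n.+1 j = Yv n j - mean (Yv n) - xx n.+1 j.
Proof.
rewrite -zeta_Y xx_succ.
by apply/matrixP => i k; rewrite !mxE; ring.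
Qed.

Hypothesis hA : forall n j y,
  gf j (th n.+1 j) + dot (xx n.+1 j) (y - th n.+1 j) - epsn n <= gf j y.
Hypothesis hxs : forall j y, gf j thstar + dot (xs j) (y - thstar) <= gf j y.
Hypothesis sxs : \sum_j xs j = - (N%:R * nu) *: thstar.

Definition phi n j := dot (xx n j) (th n j) - gf j (th n j).
Definition Phi n := \sum_j phi n j + N%:R * nu / 2 * sqnorm (avg thj n).
Definition astar j := dot (xs j) thstar - gf j thstar.
Definition Dstar := \sum_j astar j + N%:R * nu / 2 * sqnorm thstar.
Definition epsm n := if n is m.+1 then epsn m else 0.

Lemma P1 m j : phi m.+2 j + dot (th m.+2 j) (xx m.+1 j - xx m.+2 j) <= phi m.+1 j + epsn m.
Proof.
have := hA m j (th m.+2 j).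
rewrite /phi dotBr !dotBr (dotC (th _ _) (xx m.+1 j)) (dotC (th _ _) (xx m.+2 j)).
lra.
Qed.

Lemma P2 n j : phi n.+1 j + dot (th n.+1 j) (xs j - xx n.+1 j) <= astar j.
Proof.
have := hxs j (th n.+1 j).
rewrite /phi /astar !dotBr (dotC (th _ _) (xs j)) (dotC (th _ _) (xx n.+1 j)).
lra.
Qed.

Lemma P3 m j : dot (xx m.+1 j) thstar - gf j thstar <= phi m.+1 j + epsn m.
Proof.
have := hA m j thstar.
rewrite /phi !dotBr.
lra.
Qed.

Lemma mean_xs : mean xs = - nu *: thstar.
Proof.
rewrite /mean sxs scalerA; congr (_ *: _).
by rewrite mulrN mulrA mulVf ?NR0 // mul1r.
Qed.

Lemma sqnormNZ (a : R) (v : vec) : sqnorm (- a *: v) = a ^+ 2 * sqnorm v.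
Proof. by rewrite sqnormZ sqrrN. Qed.

Definition wv n j := (1 - (tseq (0 : R) n)^-1) *: xx n j + (tseq (0 : R) n)^-1 *: xs j.

Lemma step n :
  1 / (2 * nu) * \sum_j (sqnorm (xx n.+1 j - wv n j) - sqnorm (Yv n j - wv n j))
  <= (1 - (tseq 0 n)^-1) * (Phi n + N%:R * epsm n) + (tseq 0 n)^-1 * Dstar - Phi n.+1.
Proof.
set p := (tseq 0 n)^-1.
pose w := wv n.
have wE j : w j = (1 - p) *: xx n j + p *: xs j by [].
rewrite -/w.
have t1 := tseq_ge1 R n.
have t0 : 0 < tseq (0 : R) n by apply: lt_le_trans t1.
have p0 : 0 < p by rewrite invr_gt0.
have p1 : p <= 1 by rewrite invr_le1 // unitf_gt0.
have p0' : 0 <= p := ltW p0.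
have q0 : 0 <= 1 - p by rewrite subr_ge0.
have hj j : phi n.+1 j + dot (th n.+1 j) (w j - xx n.+1 j)
    <= (1 - p) * (phi n j + epsm n) + p * astar j.
  case: n @p @w wE t1 t0 p0 p1 p0' q0 => [|m] p w wE t1 t0 p0 p1 p0' q0.
    have pe : p = 1 by rewrite /p /= invr1.
    have -> : w j = xs j by rewrite wE pe subrr scale0r add0r scale1r.
    by rewrite pe subrr mul0r add0r mul1r; apply: P2.
  have -> : w j - xx m.+2 j = (1 - p) *: (xx m.+1 j - xx m.+2 j) + p *: (xs j - xx m.+2 j).
    by rewrite wE; apply/matrixP => i k; rewrite !mxE; ring.
  rewrite dotDr !dotZr.
  have h1 := ler_wpM2l q0 (P1 m j).
  have h2 := ler_wpM2l p0' (P2 m.+1 j).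
  rewrite /epsm; lra.
have hsum : \sum_j phi n.+1 j + \sum_j dot (th n.+1 j) (w j - xx n.+1 j)
    <= (1 - p) * (\sum_j phi n j + N%:R * epsm n) + p * \sum_j astar j.
  have hs1 : \sum_j (phi n.+1 j + dot (th n.+1 j) (w j - xx n.+1 j))
      <= \sum_j ((1 - p) * (phi n j + epsm n) + p * astar j).
    by apply: ler_sum => j _; exact: hj j.
  have eL : \sum_j (phi n.+1 j + dot (th n.+1 j) (w j - xx n.+1 j)) =
      \sum_j phi n.+1 j + \sum_j dot (th n.+1 j) (w j - xx n.+1 j).
    exact: big_split.
  have eR : \sum_j ((1 - p) * (phi n j + epsm n) + p * astar j) =
      (1 - p) * (\sum_j phi n j + N%:R * epsm n) + p * \sum_j astar j.
    rewrite (big_split _ _ _ (fun j => (1 - p) * (phi n j + epsm n))) /=.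
    rewrite -!mulr_sumr -sumr_constR.
    by rewrite (big_split _ _ _ (fun j => phi n j)).
  by rewrite -eL -eR.
have key := key_ineq N0 (xx n.+1) (Yv n) p0' p1 wE.
have eS : \sum_j dot (Yv n j - mean (Yv n) - xx n.+1 j) (w j - xx n.+1 j) =
    nu * \sum_j dot (th n.+1 j) (w j - xx n.+1 j).
  by rewrite mulr_sumr; apply: eq_bigr => j _; rewrite -th_Y dotZl.
rewrite eS !mean_xx mean_xs !sqnormNZ in key.
set K := \sum_j _ in key *.
set S := \sum_j dot (th n.+1 j) (w j - xx n.+1 j) in key hsum.
have key2 : 1 / 2 * K <= nu * (S + N%:R * nu / 2 * ((1 - p) * sqnorm (avg thj n)
    + p * sqnorm thstar - sqnorm (avg thj n.+1))) by lra.
have key3 : 1 / (2 * nu) * K <= S + N%:R * nu / 2 * ((1 - p) * sqnorm (avg thj n)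
    + p * sqnorm thstar - sqnorm (avg thj n.+1)).
  rewrite -(ler_pM2l nu0).
  have -> : nu * (1 / (2 * nu) * K) = 1 / 2 * K by field; rewrite gt_eqF.
  exact: key2.
rewrite /Phi /Dstar; lra.
Qed.

Definition U n j : vec :=
  if n is m.+1 then tseq 0 m *: xx n j - (tseq 0 m - 1) *: xx m j - xs j else - xs j.

Lemma step_U n :
  tseq (0 : R) n ^+ 2 * (Phi n.+1 - Dstar) + 1 / (2 * nu) * \sum_j sqnorm (U n.+1 j)
  <= (tseq 0 n ^+ 2 - tseq 0 n) * (Phi n - Dstar + N%:R * epsm n)
     + 1 / (2 * nu) * \sum_j sqnorm (U n j).
Proof.
have hs := step n.
have t1 := tseq_ge1 R n.
have t0 : 0 < tseq (0 : R) n by apply: lt_le_trans t1.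
have tn0 : tseq (0 : R) n != 0 by rewrite gt_eqF.
have e1 j : tseq 0 n *: (xx n.+1 j - wv n j) = U n.+1 j.
  by rewrite /wv /U; apply/matrixP => i k; rewrite !mxE; field.
have e2 j : tseq 0 n *: (Yv n j - wv n j) = U n j.
  case: n {hs t1 t0} tn0 e1 => [|m] tn0 e1.
    rewrite /wv /Yv /U /=; apply/matrixP => i k; rewrite !mxE invr1; ring.
  rewrite /wv /Yv /U beta0; apply/matrixP => i k; rewrite !mxE; field.
  by rewrite gt_eqF // (lt_le_trans ltr01 (tseq_ge1 R m.+1)).
have eK : tseq 0 n ^+ 2 * \sum_j (sqnorm (xx n.+1 j - wv n j) - sqnorm (Yv n j - wv n j))
    = \sum_j sqnorm (U n.+1 j) - \sum_j sqnorm (U n j).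
  rewrite mulr_sumr -sumrB; apply: eq_bigr => j _.
  by rewrite mulrBr -!sqnormZ e1 e2.
have t20 : 0 <= tseq (0 : R) n ^+ 2 by rewrite sqr_ge0.
have := ler_wpM2l t20 hs.
set K := \sum_j _.
set A := Phi n; set B := Phi n.+1; set D := Dstar; set E := epsm n.
have -> : tseq 0 n ^+ 2 * (1 / (2 * nu) * K) = 1 / (2 * nu) * (tseq 0 n ^+ 2 * K) by ring.
have -> : tseq 0 n ^+ 2 * ((1 - (tseq 0 n)^-1) * (A + N%:R * E) + (tseq 0 n)^-1 * D - B)
  = (tseq 0 n ^+ 2 - tseq 0 n) * (A + N%:R * E) + tseq 0 n * D - tseq 0 n ^+ 2 * B.
  by field.
rewrite /K eK.
lra.
Qed.

Hypothesis gam0 : 0 < gamma.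

Lemma pow_ge (n : nat) : n.+1%:R ^+ 4 <= n.+1%:R `^ (4 + gamma) :> R.
Proof.
have a1 : 1 <= n.+1%:R :> R by rewrite ler1n.
rewrite -powR_mulrn ?ler0n //.
apply: ler_powR => //; rewrite lerDl; exact: ltW.
Qed.

Lemma Neps_le n : N%:R * epsn n <= (nu * n.+1%:R ^+ 4)^-1.
Proof.
have a0 : 0 < n.+1%:R :> R by rewrite ltr0n.
have P4 : 0 < n.+1%:R ^+ 4 :> R by rewrite exprn_gt0.
have P0 : 0 < n.+1%:R `^ (4 + gamma) :> R by apply: lt_le_trans (pow_ge n).
rewrite /epsn.
have -> : N%:R * (N%:R * nu * n.+1%:R `^ (4 + gamma))^-1 = (nu * n.+1%:R `^ (4 + gamma))^-1.
  by field; rewrite !gt_eqF // ltr0n.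
rewrite lef_pV2 ?posrE ?mulr_gt0 //.
by rewrite ler_pM2l // pow_ge.
Qed.

Lemma eps_bound n : tseq (0 : R) n ^+ 2 * (N%:R * epsn n) <=
  2 * (n.+1%:R^-1 - n.+2%:R^-1) / nu.
Proof.
set a : R := n.+1%:R.
have a1 : 1 <= a by rewrite ler1n.
have a0 : 0 < a by apply: lt_le_trans a1.
have e2 : n.+2%:R = a + 1 :> R by rewrite /a -addn1 natrD.
rewrite e2.
have tle : tseq (0 : R) n ^+ 2 <= a ^+ 2.
  rewrite ler_sqr ?nnegrE ?tseq_ge0 ?(ltW a0) //; exact: tseq_le.
have h := Neps_le n; rewrite -/a in h.
have hN : 0 <= N%:R * epsn n.
  by rewrite mulr_ge0 ?ler0n // /epsn invr_ge0 mulr_ge0 ?mulr_ge0 ?ler0n ?ltW // powR_ge0.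
apply: (le_trans (ler_pM (sqr_ge0 _) hN tle h)).
have -> : a ^+ 2 * (nu * a ^+ 4)^-1 = 1 / (nu * a ^+ 2).
  by field; rewrite !gt_eqF.
have -> : 2 * (a^-1 - (a + 1)^-1) / nu = 2 / (nu * a * (a + 1)).
  by field; rewrite !gt_eqF // ltr_wpDl.
rewrite -subr_ge0.
have -> : 2 / (nu * a * (a + 1)) - 1 / (nu * a ^+ 2) = (a - 1) / (nu * a ^+ 2 * (a + 1)).
  by field; rewrite !gt_eqF // ltr_wpDl.
by rewrite divr_ge0 ?subr_ge0 // ltW // !mulr_gt0 // ?exprn_gt0 // ltr_wpDl.
Qed.

Lemma W_bound n :
  tseq (0 : R) n ^+ 2 * (Phi n.+1 - Dstar) + 1 / (2 * nu) * \sum_j sqnorm (U n.+1 j)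
  <= 1 / (2 * nu) * \sum_j sqnorm (xs j) + 2 * (2 - n.+1%:R^-1) / nu.
Proof.
elim: n => [|n IH].
  have := step_U 0.
  have -> : tseq (0 : R) 0 = 1 by [].
  rewrite expr1n subrr mul0r add0r.
  have -> : \sum_j sqnorm (U 0 j) = \sum_j sqnorm (xs j).
    by apply: eq_bigr => j _; rewrite /U sqnormN.
  move=> h; apply: (le_trans h); rewrite lerDl.
  have -> : (0%:R.+1%:R : R)^-1 = 1 by rewrite invr1.
  by rewrite divr_ge0 // ?ltW //; lra.
have := step_U n.+1.
have [hr _ _] := tseq_facts R n.
have -> : epsm n.+1 = epsn n by [].
rewrite hr => h.
have eb := eps_bound n.
apply: (le_trans h).
have -> : 2 * (2 - n.+2%:R^-1) / nu = 2 * (2 - n.+1%:R^-1) / nu + 2 * (n.+1%:R^-1 - n.+2%:R^-1) / nu.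
  have hn := ler0n R n.
  by field; rewrite gt_eqF //= !gt_eqF //; lra.
move: IH eb; set V := Phi n.+1 - Dstar.
move=> IH eb; rewrite mulrDr.
move: IH eb; set A1 := tseq 0 n ^+ 2 * V; set A2 := tseq 0 n ^+ 2 * (N%:R * epsn n).
set A3 := 1 / (2 * nu) * _; set A4 := 2 * (2 - _) / nu; set A5 := 2 * (_ - _) / nu.
lra.
Qed.

Lemma V_lb m : N%:R * nu / 2 * sqnorm (avg thj m.+1 - thstar)
  <= Phi m.+1 - Dstar + N%:R * epsn m.
Proof.
have hs : \sum_j (dot (xx m.+1 j) thstar - gf j thstar) <= \sum_j (phi m.+1 j + epsn m).
  by apply: ler_sum => j _; apply: P3.
rewrite sumrB -dot_suml sum_xx dotZl in hs.
rewrite (big_split _ _ _ (fun j => phi m.+1 j)) /= sumr_constR in hs.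
have eD : \sum_j astar j = - (N%:R * nu) * sqnorm thstar - \sum_j gf j thstar.
  by rewrite /astar sumrB -dot_suml sxs dotZl.
rewrite /Phi /Dstar eD sqnormB.
move: hs; set S1 := \sum_j phi m.+1 j; set S2 := \sum_j gf j thstar.
set a := dot (avg thj m.+1) thstar; set b := sqnorm (avg thj m.+1); set c := sqnorm thstar.
set e := epsn m; set Nn := N%:R.
lra.
Qed.

Definition C0 := 1 / (2 * nu) * \sum_j sqnorm (xs j) + 4 / nu.
Definition Crate := 2 / (N%:R * nu) * (4 * C0 + 1 / nu).

Lemma C0_ge0 : 0 <= C0.
Proof.
have hs : 0 <= \sum_j sqnorm (xs j) by apply: sumr_ge0 => j _; apply: sqnorm_ge0.
have i1 : 0 < 1 / (2 * nu) by rewrite divr_gt0 // mulr_gt0.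
have i2 : 0 <= 1 / (2 * nu) * \sum_j sqnorm (xs j) by rewrite mulr_ge0 // ltW.
have i3 : 0 < 4 / nu by rewrite divr_gt0.
rewrite /C0; lra.
Qed.

Lemma Crate_gt0 : 0 < Crate.
Proof.
have hs : 0 <= \sum_j sqnorm (xs j) by apply: sumr_ge0 => j _; apply: sqnorm_ge0.
have hN : 0 < N%:R :> R by rewrite ltr0n.
have h1 : 0 < 2 / (N%:R * nu) by rewrite divr_gt0 // mulr_gt0.
have h2 : 0 <= C0 by apply: C0_ge0.
have h3 : 0 < 1 / nu by rewrite divr_gt0.
by rewrite /Crate mulr_gt0 //; lra.
Qed.

Lemma rate m : sqnorm (avg thj m.+1 - thstar) <= Crate / (m.+1%:R ^+ 2).
Proof.
set a : R := m.+1%:R.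
have a1 : 1 <= a by rewrite ler1n.
have a0 : 0 < a by apply: lt_le_trans a1.
have hN : 0 < N%:R :> R by rewrite ltr0n.
have hV := V_lb m.
have hW := W_bound m.
have hU : 0 <= 1 / (2 * nu) * \sum_j sqnorm (U m.+1 j).
  have i1 : 0 < 1 / (2 * nu) by rewrite divr_gt0 // mulr_gt0.
  apply: mulr_ge0; first exact: ltW.
  by apply: sumr_ge0 => j _; apply: sqnorm_ge0.
have hs : 0 <= \sum_j sqnorm (xs j) by apply: sumr_ge0 => j _; apply: sqnorm_ge0.
have hC : 2 * (2 - m.+1%:R^-1) / nu <= 4 / nu.
  rewrite ler_pM2r ?invr_gt0 //.
  have : 0 <= m.+1%:R^-1 :> R by rewrite invr_ge0 ler0n.
  move: (m.+1%:R^-1 : R) => x; lra.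
set V := Phi m.+1 - Dstar in hV hW.
have tge : a / 2 <= tseq (0 : R) m.
  by apply: (le_trans _ (tseq_ge R m)); rewrite ler_pM2r // ler_nat.
have t0 : 0 < tseq (0 : R) m by apply: lt_le_trans (tseq_ge1 R m).
have hV2 : tseq (0 : R) m ^+ 2 * V <= C0.
  rewrite /C0; move: hW hC hU; set q := 2 * (2 - _) / nu; set r := 1 / (2 * nu) * _.
  set r2 := 1 / (2 * nu) * _; lra.
have C00 := C0_ge0.
have hV3 : V <= 4 * C0 / a ^+ 2.
  have t2 : a ^+ 2 / 4 <= tseq (0 : R) m ^+ 2.
    have : (a / 2) ^+ 2 <= tseq (0 : R) m ^+ 2.
      have n1 : a / 2 \is Num.nneg by rewrite nnegrE divr_ge0 // ltW.
      have n2 : tseq (0 : R) m \is Num.nneg by rewrite nnegrE tseq_ge0.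
      by rewrite ler_sqr.
    by rewrite expr_div_n; lra.
  have ht2 : 0 < tseq (0 : R) m ^+ 2 by rewrite exprn_gt0.
  have hVt : V <= C0 / tseq (0 : R) m ^+ 2 by rewrite ler_pdivlMr // mulrC.
  apply: (le_trans hVt).
  have -> : 4 * C0 / a ^+ 2 = C0 / (a ^+ 2 / 4) by field; rewrite gt_eqF.
  by apply: ler_wpM2l => //; rewrite lef_pV2 ?posrE ?divr_gt0 ?exprn_gt0.
have he : N%:R * epsn m <= 1 / (nu * a ^+ 2).
  apply: (le_trans (Neps_le m)); rewrite -/a div1r lef_pV2 ?posrE ?mulr_gt0 ?exprn_gt0 //.
  by rewrite ler_pM2l // ler_weXn2l.
have key : N%:R * nu / 2 * sqnorm (avg thj m.+1 - thstar) <= (4 * C0 + 1 / nu) / a ^+ 2.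
  apply: (le_trans hV); apply: le_trans (lerD hV3 he) _.
  have -> : 1 / (nu * a ^+ 2) = 1 / nu / a ^+ 2 by field; rewrite !gt_eqF.
  by rewrite -mulrDl.
have hpos : 0 < N%:R * nu / 2 by rewrite divr_gt0 ?mulr_gt0.
rewrite -(ler_pM2l hpos); apply: (le_trans key).
have -> : N%:R * nu / 2 * (Crate / a ^+ 2) = (4 * C0 + 1 / nu) / a ^+ 2.
  by rewrite /Crate; field; rewrite !gt_eqF.
by [].
Qed.

End Algo.

Unset Implicit Arguments. Set Strict Implicit. Set Printing Implicit Defensive.

Lemma coord_lt (R : realType) d (v : 'rV[R]_d) (e : R) : 0 < e ->
  sqnorm v < e ^+ 2 -> `|v| < e.
Proof.
move=> e0 hv.
have -> : `|v| = mx_norm v by [].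
rewrite mx_normrE; apply: bigmax_lt => // [[i k]] _ /=.
rewrite (ord1 i).
have hk : v ord0 k ^+ 2 <= sqnorm v.
  rewrite /sqnorm /dot (bigD1 k) //= -expr2 lerDl.
  by apply: sumr_ge0 => l _; rewrite -expr2 sqr_ge0.
have h2 : `|v ord0 k| ^+ 2 < e ^+ 2 by rewrite real_normK ?num_real //; apply: le_lt_trans hv.
have n0 : 0 <= `|v ord0 k| by [].
nra.
Qed.

Theorem theorem3p2 (R : realType) (d N : nat) (f : 'I_N -> 'rV[R]_d -> R)
  (mu nu gamma : R) (thstar : 'rV[R]_d) (thj : nat -> 'I_N -> 'rV[R]_d) :
  (0 < N)%N ->
  (forall j, continuous (f j)) ->
  (forall j, convex_fun (f j)) ->
  coercive (fun th => N%:R^-1 * \sum_(j < N) f j th) ->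
  0 < mu ->
  (forall j, strongly_convex mu (f j)) ->
  (forall th, N%:R^-1 * \sum_(j < N) f j thstar <= N%:R^-1 * \sum_(j < N) f j th) ->
  0 < nu -> nu <= mu ->
  0 < gamma ->
  (forall (n : nat) (j : 'I_N),
     (Gap f nu 0 thj n j (thj n.+1 j)
       <= ((N%:R * nu * (n.+1%:R `^ (4 + gamma)))^-1)%:E)%E) ->
  avg thj @ \oo --> thstar /\
  exists C : R, 0 < C /\
    forall n : nat, (1 <= n)%N -> sqnorm (avg thj n - thstar) <= C / (n%:R ^+ 2).
Proof.
move=> N0 _ cvx _ mu0 sc thmin nu0 numu gam0 hgap.
have hN : 0 < N%:R :> R by rewrite ltr0n.
have thmin' : forall y, \sum_j f j thstar <= \sum_j f j y.
  by move=> y; have := thmin y; rewrite ler_pM2l // invr_gt0.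
have [s [ss hs]] := sum_rule mu0 sc cvx thmin'.
have hs2 j := strong_subgrad mu0 (sc j) (hs j).
pose xs j := s j - nu *: thstar.
have hxs : forall j y, gf f nu j thstar + dot (xs j) (y - thstar) <= gf f nu j y.
  move=> j y; have := hs2 j y.
  rewrite /gf /xs dotBl dotZl sqnormB (dotC y thstar) dotBr.
  have hD : nu * sqnorm (y - thstar) <= mu * sqnorm (y - thstar).
    by apply: ler_wpM2r => //; apply: sqnorm_ge0.
  rewrite sqnormB (dotC y thstar) in hD.
  rewrite dotBr -[dot thstar thstar]/(sqnorm thstar); lra.
have sxs : \sum_j xs j = - (N%:R * nu) *: thstar.
  rewrite /xs sumrB ss sum_const_vec scalerA sub0r.
  by rewrite -scaleNr mulrC.
have hA : forall n j y, gf f nu j (th thj n.+1 j) + dot (xx nu thj n.+1 j) (y - th thj n.+1 j)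
    - epsn N nu gamma n <= gf f nu j y.
  by move=> n j y; exact: (gap_ineq nu0 (hgap n j) y).
have hrate := rate N0 nu0 hA hxs sxs gam0.
have hC := Crate_gt0 xs N0 nu0.
split; last first.
  exists (Crate nu xs); split => // -[|m] // _.
apply/cvgrPdist_lt => e e0.
set C := Crate nu xs.
have e20 : 0 < e ^+ 2 by rewrite exprn_gt0.
exists (Num.trunc (C / e ^+ 2)).+1 => // n /= hn.
case: n hn => [|m] // hm.
rewrite -normrN opprB; apply: coord_lt => //.
apply: (le_lt_trans (hrate m)).
have hk := truncnS_gt (C / e ^+ 2).
have hmk : ((Num.trunc (C / e ^+ 2)).+1%:R : R) <= m.+1%:R by rewrite ler_nat.
have hm1 : (m.+1%:R : R) <= m.+1%:R ^+ 2.
  by rewrite expr2 ler_peMl ?ler0n // ler1n.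
have hlt : C / e ^+ 2 < m.+1%:R ^+ 2 by lra.
rewrite ltr_pdivrMr ?exprn_gt0 ?ltr0n //.
by rewrite mulrC -ltr_pdivrMr.
Qed.
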